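(* For every real $n\times p$ matrix $X$ with nonzero columns, every $S\subset\{1,\dots,p\}$ and every $s>0$, \[ \phi(S)^2\ge\bar\phi(1)^2-15|S|\,\mathrm{mc}(X),\qquad \bar\phi(s)^2\ge\tilde\phi(s)^2\ge\bar\phi(1)^2-s\,\mathrm{mc}(X). \]
   Context: $X_{\cdot,i}$ is the $i$th column, $\|X\|=\max_i\|X_{\cdot,i}\|_2$, $S_\beta=\{i:\beta_i\ne0\}$, $\beta_S=(\beta_i)_{i\in S}$. $\phi(S)=\inf\{\|X\beta\|_2|S|^{1/2}/(\|X\|\|\beta_S\|_1):\beta\in\mathbb R^p,\|\beta_{S^c}\|_1\le7\|\beta_S\|_1,\beta_S\ne0\}$; $\bar\phi(s)=\inf\{\|X\beta\|_2|S_\beta|^{1/2}/(\|X\|\|\beta\|_1):0\ne|S_\beta|\le s\}$; $\tilde\phi(s)=\inf\{\|X\beta\|_2/(\|X\|\|\beta\|_2):0\ne|S_\beta|\le s\}$; $\mathrm{mc}(X)=\max_{i\ne j}|\langle X_{\cdot,i},X_{\cdot,j}\rangle|/(\|X_{\cdot,i}\|_2\|X_{\cdot,j}\|_2)$. *)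

(* Defs.v *)
From HB Require Import structures.
From mathcomp Require Import all_boot all_order all_algebra.
From mathcomp Require Import all_classical all_reals ereal.
Set Implicit Arguments. Unset Strict Implicit. Unset Printing Implicit Defensive.
Import Order.TTheory GRing.Theory Num.Theory.
Local Open Scope ring_scope.
Local Open Scope classical_set_scope.

Section Defs.
Variable R : realType.

Definition l2norm (m : nat) (v : 'cV[R]_m) : R := Num.sqrt (\sum_i v i 0 ^+ 2).

Definition l1on (p : nat) (A : {set 'I_p}) (b : 'cV[R]_p) : R :=
  \sum_(i in A) `|b i 0|.

Definition supp (p : nat) (b : 'cV[R]_p) : {set 'I_p} := [set i | b i 0 != 0].

Definition matnorm (n p : nat) (X : 'M[R]_(n, p)) : R :=
  \big[Num.max/0]_(i < p) l2norm (col i X).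

(* mutual coherence (max over the empty set taken as 0) *)
Definition mc (n p : nat) (X : 'M[R]_(n, p)) : R :=
  \big[Num.max/0]_(i < p) \big[Num.max/0]_(j < p | i != j)
     (`|((col i X)^T *m col j X) 0 0| / (l2norm (col i X) * l2norm (col j X))).

(* compatibility constant phi(S), as an extended real (inf of empty set = +oo) *)
Definition phiS (n p : nat) (X : 'M[R]_(n, p)) (S : {set 'I_p}) : \bar R :=
  ereal_inf [set (l2norm (X *m b) * Num.sqrt (#|S|%:R) / (matnorm X * l1on S b))%:E
            | b in [set b : 'cV[R]_p | l1on (~: S) b <= 7 * l1on S b
                                       /\ [exists i in S, b i 0 != 0]]].

Definition phibar (n p : nat) (X : 'M[R]_(n, p)) (s : R) : \bar R :=
  ereal_inf [set (l2norm (X *m b) * Num.sqrt (#|supp b|%:R) / (matnorm X * l1on [set: 'I_p]%SET b))%:E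
            | b in [set b : 'cV[R]_p | (0 < #|supp b|)%N /\ #|supp b|%:R <= s]].

Definition phitilde (n p : nat) (X : 'M[R]_(n, p)) (s : R) : \bar R :=
  ereal_inf [set (l2norm (X *m b) / (matnorm X * l2norm b))%:E
            | b in [set b : 'cV[R]_p | (0 < #|supp b|)%N /\ #|supp b|%:R <= s]].

End Defs.

(* Main.v *)
Require Import Defs.
From HB Require Import structures.
From mathcomp Require Import all_boot all_order all_algebra.
From mathcomp Require Import all_classical all_reals ereal.
From mathcomp Require Import ring lra.
Import Order.TTheory GRing.Theory Num.Theory.
Local Open Scope ring_scope.
Set Implicit Arguments. Unset Strict Implicit.
Local Open Scope classical_set_scope.
Lemma inf_ge0 (R : realType) (T : Type) (P : set T) (g : T -> R) :
  (forall b, P b -> 0 <= g b) ->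
  (0 <= ereal_inf [set (g b)%:E | b in P])%E.
Proof.
move=> H; apply/ereal_infP => _ [b Pb <-]; rewrite lee_fin; exact: H.
Qed.

Lemma EL (R : realType) (T : Type) (P : set T) (g : T -> R) (L : \bar R) :
 (forall b, P b -> 0 <= g b /\ (L <= (g b * g b)%:E)%E) ->
 (L <= ereal_inf [set (g b)%:E | b in P] * ereal_inf [set (g b)%:E | b in P])%E.
Proof.
move=> H.
have m0 := @inf_ge0 R T P g (fun b Pb => (H b Pb).1).
set m := ereal_inf _ in m0 *.
case: L H => [l| |] H; last first.
- by rewrite leNye.
- have -> : m = +oo%E.
    rewrite /m; suff -> : [set (g b)%:E | b in P] = set0 by rewrite ereal_inf0.
    apply/seteqP; split => // x [b Pb _]; have := (H b Pb).2; by rewrite leye_eq.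
  by rewrite mulyy.
case: (leP l 0) => l0.
  by apply: (le_trans _ (mule_ge0 m0 m0)); rewrite lee_fin.
set t := Num.sqrt l.
have tm : (t%:E <= m)%E.
  apply/ereal_infP => _ [b Pb <-]; rewrite lee_fin.
  have [gb0 Hb] := H b Pb; rewrite lee_fin in Hb.
  have -> : g b = Num.sqrt (g b ^+ 2) by rewrite sqrtr_sqr ger0_norm.
  by rewrite /t ler_sqrt ?sqr_ge0 // expr2.
have t0 : (0 <= t%:E)%E by rewrite lee_fin sqrtr_ge0.
apply: le_trans (lee_pmul t0 t0 tm tm).
by rewrite -EFinM lee_fin -expr2 sqr_sqrtr // ltW.
Qed.

Lemma EL2 (R : realType) (T : Type) (P : set T) (g1 g2 : T -> R) :
 (forall b, P b -> 0 <= g1 b /\ g1 b <= g2 b) ->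
 (ereal_inf [set (g1 b)%:E | b in P] * ereal_inf [set (g1 b)%:E | b in P] <=
  ereal_inf [set (g2 b)%:E | b in P] * ereal_inf [set (g2 b)%:E | b in P])%E.
Proof.
move=> H.
have m0 := @inf_ge0 R T P g1 (fun b Pb => (H b Pb).1).
have le : (ereal_inf [set (g1 b)%:E | b in P] <= ereal_inf [set (g2 b)%:E | b in P])%E.
  apply/ereal_infP => _ [b Pb <-].
  apply: le_trans (ereal_inf_lbound _) _; first by exists b.
  by rewrite lee_fin; exact: (H b Pb).2.
exact: lee_pmul.
Qed.
Definition Gm (R : realType) n p (X : 'M[R]_(n, p)) (i j : 'I_p) : R :=
  \sum_k X k i * X k j.
Definition Nc (R : realType) n p (X : 'M[R]_(n, p)) (i : 'I_p) : R :=
  l2norm (col i X).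
Definition Bf (R : realType) n p (X : 'M[R]_(n, p)) (u v : 'cV[R]_p) : R :=
  \sum_k (X *m u) k 0 * (X *m v) k 0.

Lemma l2norm_sq (R : realType) m (v : 'cV[R]_m) :
  l2norm v ^+ 2 = \sum_i v i 0 ^+ 2.
Proof. by rewrite /l2norm sqr_sqrtr // sumr_ge0 // => i _; exact: sqr_ge0. Qed.

Lemma l2norm_ge0 (R : realType) m (v : 'cV[R]_m) : 0 <= l2norm v.
Proof. exact: sqrtr_ge0. Qed.

Lemma Nc_sq (R : realType) n p (X : 'M[R]_(n, p)) i : Nc X i ^+ 2 = Gm X i i.
Proof.
by rewrite /Nc l2norm_sq /Gm; apply: eq_bigr => k _; rewrite !mxE expr2.
Qed.

Lemma Nc_gt0 (R : realType) n p (X : 'M[R]_(n, p)) i :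
  col i X != 0 -> 0 < Nc X i.
Proof.
move=> nz; rewrite /Nc /l2norm sqrtr_gt0 lt_def sumr_ge0 ?andbT; last first.
  by move=> k _; exact: sqr_ge0.
apply: contra nz; rewrite psumr_eq0; last by move=> k _; exact: sqr_ge0.
move/allP => H; apply/eqP/matrixP => k l; rewrite (ord1 l) mxE.
by have /implyP/(_ isT) := H k (mem_index_enum _); rewrite sqrf_eq0 => /eqP; rewrite !mxE.
Qed.

Lemma Nc_le (R : realType) n p (X : 'M[R]_(n, p)) i : Nc X i <= matnorm X.
Proof. exact: (le_bigmax 0 (fun i => l2norm (col i X)) i). Qed.

Lemma mc_ge0 (R : realType) n p (X : 'M[R]_(n, p)) : 0 <= mc X.
Proof. exact: bigmax_ge_id. Qed.

Lemma mc_bound (R : realType) n p (X : 'M[R]_(n, p)) i j :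
  (forall i, col i X != 0) -> i != j ->
  `|Gm X i j| <= mc X * (Nc X i * Nc X j).
Proof.
move=> Xc ij.
have Np : 0 < Nc X i * Nc X j by rewrite mulr_gt0 // Nc_gt0.
rewrite -ler_pdivrMr //.
have -> : Gm X i j = ((col i X)^T *m col j X) 0 0.
  by rewrite !mxE; apply: eq_bigr => k _; rewrite !mxE.
apply: le_trans (le_bigmax 0 _ i).
exact: (le_bigmax_cond 0 (P := fun j => i != j)
   (fun j => `|((col i X)^T *m col j X) 0 0| / (l2norm (col i X) * l2norm (col j X)))).
Qed.

Lemma Bf_expand (R : realType) n p (X : 'M[R]_(n, p)) u v :
  Bf X u v = \sum_i \sum_j u i 0 * v j 0 * Gm X i j.
Proof.
rewrite /Bf.
transitivity (\sum_k \sum_i \sum_j (u i 0 * v j 0 * (X k i * X k j))).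
  apply: eq_bigr => k _; rewrite !mxE mulr_suml; apply: eq_bigr => i _.
  rewrite mulr_sumr; apply: eq_bigr => j _; ring.
rewrite exchange_big; apply: eq_bigr => i _.
rewrite exchange_big; apply: eq_bigr => j _.
by rewrite /Gm mulr_sumr.
Qed.

Lemma Bf_sq (R : realType) n p (X : 'M[R]_(n, p)) b :
  l2norm (X *m b) ^+ 2 = Bf X b b.
Proof. by rewrite l2norm_sq /Bf; apply: eq_bigr => k _; rewrite expr2. Qed.

Lemma Bf_ge0 (R : realType) n p (X : 'M[R]_(n, p)) b : 0 <= Bf X b b.
Proof. by rewrite -Bf_sq sqr_ge0. Qed.

Lemma Bf_sym (R : realType) n p (X : 'M[R]_(n, p)) u v : Bf X u v = Bf X v u.
Proof. by rewrite /Bf; apply: eq_bigr => k _; rewrite mulrC. Qed.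

Lemma Bf_add (R : realType) n p (X : 'M[R]_(n, p)) u v :
  Bf X (u + v) (u + v) = Bf X u u + 2 * Bf X u v + Bf X v v.
Proof.
rewrite /Bf mulmxDr.
rewrite (_ : 2 * _ = \sum_k 2 * ((X *m u) k 0 * (X *m v) k 0)); last by rewrite mulr_sumr.
rewrite -!big_split /=; apply: eq_bigr => k _; rewrite !mxE; ring.
Qed.

Lemma Bf_lower (R : realType) n p (X : 'M[R]_(n, p)) (u v : 'cV[R]_p) :
  (forall i, col i X != 0) ->
  \sum_i (u i 0 * v i 0 * Nc X i ^+ 2
     - mc X * (`|u i 0| * Nc X i) * (\sum_j `|v j 0| * Nc X j - `|v i 0| * Nc X i))
  <= Bf X u v.
Proof.
move=> Xc; rewrite Bf_expand; apply: ler_sum => i _.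
rewrite [X in _ <= X](bigD1 i) //= Nc_sq lerD2l.
rewrite (bigD1 i) //= addrAC subrr add0r mulr_sumr -sumrN.
apply: ler_sum => j ji.
have := mc_bound Xc (i:=i) (j:=j); rewrite eq_sym ji => /(_ isT) h.
rewrite -lerNl.
apply: le_trans (ler_norm _) _.
rewrite normrN !normrM.
rewrite (_ : _ * (_ * _) = `|u i 0| * `|v j 0| * (mc X * (Nc X i * Nc X j))); last by ring.
rewrite ler_wpM2l // mulr_ge0 //.
Qed.
Lemma cauchy_set (R : realType) p (A : {set 'I_p}) (x : 'I_p -> R) :
  (\sum_(i in A) x i) ^+ 2 <= #|A|%:R * \sum_(i in A) x i ^+ 2.
Proof.
set T := \sum_(i in A) x i; set Q := \sum_(i in A) x i ^+ 2.
have H : \sum_(i in A) \sum_(j in A) (x i - x j) ^+ 2 = 2 * (#|A|%:R * Q - T ^+ 2).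
  transitivity (\sum_(i in A) (#|A|%:R * x i ^+ 2 + Q - 2 * x i * T)).
    apply: eq_bigr => i _.
    rewrite (eq_bigr (fun j => x i ^+ 2 + x j ^+ 2 - 2 * x i * x j)); last first.
      by move=> j _; ring.
    rewrite !big_split /= sumr_const sumrN /T mulr_sumr; congr (_ + _ - _); by rewrite mulr_natl.
  rewrite !big_split /= sumrN -mulr_sumr -mulr_suml -mulr_sumr.
  rewrite -/Q -/T sumr_const -mulr_natl; ring.
have : 0 <= \sum_(i in A) \sum_(j in A) (x i - x j) ^+ 2.
  by apply: sumr_ge0 => i _; apply: sumr_ge0 => j _; exact: sqr_ge0.
rewrite H pmulr_rge0 // subr_ge0 //.
Qed.

Lemma sum_supp (R : realType) p (b : 'cV[R]_p) (F : 'I_p -> R) :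
  (forall i, b i 0 = 0 -> F i = 0) ->
  \sum_i F i = \sum_(i in supp b) F i.
Proof.
move=> H; rewrite [RHS]big_mkcond /=; apply: eq_bigr => i _.
rewrite /supp inE; case: eqP => // /H ->; by [].
Qed.

Lemma part1_real (R : realType) n p (X : 'M[R]_(n, p))
  (Xcol : forall i : 'I_p, col i X != 0) (S : {set 'I_p}) (b : 'cV[R]_p)
  (c0 : R) (hc0 : 0 <= c0) (hc : forall j, c0 * matnorm X <= Nc X j)
  (hM : 0 < matnorm X)
  (ha : 0 < l1on S b) (hcone : l1on (~: S) b <= 7 * l1on S b)
  (hS : (0 < #|S|)%N) :
  c0 * c0 - 15 * #|S|%:R * mc X <=
  (l2norm (X *m b) * Num.sqrt (#|S|%:R) / (matnorm X * l1on S b)) *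
  (l2norm (X *m b) * Num.sqrt (#|S|%:R) / (matnorm X * l1on S b)).
Proof.
set M := matnorm X; set mu := mc X; set a := l1on S b.
have mu0 : 0 <= mu by exact: mc_ge0.
have N0 : forall i, 0 <= Nc X i by move=> i; apply: ltW; exact: Nc_gt0.
have NM : forall i, Nc X i <= M by move=> i; exact: Nc_le.
have cN2 : forall i, c0 ^+ 2 * M ^+ 2 <= Nc X i ^+ 2.
  move=> i; rewrite -exprMn lerXn2r ?nnegrE ?mulr_ge0 ?N0 //; exact: ltW.
set u : 'cV[R]_p := \col_i (if i \in S then b i 0 else 0).
set v : 'cV[R]_p := \col_i (if i \in S then 0 else b i 0).
have hb : b = u + v.
  apply/matrixP => i j; rewrite (ord1 j) !mxE; case: (i \in S); ring.
set U := \sum_i `|u i 0| * Nc X i.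
set V := \sum_i `|v i 0| * Nc X i.
have U0 : 0 <= U by apply: sumr_ge0 => i _; rewrite mulr_ge0.
have V0 : 0 <= V by apply: sumr_ge0 => i _; rewrite mulr_ge0.
have hU : U <= M * a.
  rewrite /a /l1on mulr_sumr big_mkcond /=; apply: ler_sum => i _.
  rewrite !mxE; case: (i \in S); last by rewrite normr0 mul0r.
  by rewrite mulrC ler_wpM2r.
have hV : V <= M * l1on (~: S) b.
  rewrite /l1on mulr_sumr big_mkcond /=; apply: ler_sum => i _.
  rewrite !mxE inE; case: (i \in S) => /=; first by rewrite normr0 mul0r.
  by rewrite mulrC ler_wpM2r.
set Qs := \sum_(i in S) b i 0 ^+ 2.
have hCS : a ^+ 2 <= #|S|%:R * Qs.
  have := cauchy_set S (fun i => `|b i 0|).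
  have -> : \sum_(i in S) `|b i 0| ^+ 2 = Qs.
    by apply: eq_bigr => i _; rewrite real_normK // num_real.
  by [].
have hBuu : c0 ^+ 2 * M ^+ 2 * Qs - mu * U * U <= Bf X u u.
  apply: le_trans (Bf_lower u u Xcol).
  have E : \sum_i ((if i \in S then c0 ^+ 2 * M ^+ 2 * b i 0 ^+ 2 else 0)
                 - mu * (`|u i 0| * Nc X i) * U) = c0 ^+ 2 * M ^+ 2 * Qs - mu * U * U.
    by rewrite sumrB -big_mkcond /= -mulr_suml -mulr_sumr -mulr_sumr.
  rewrite -E; apply: ler_sum => i _.
  have e1 : 0 <= mu * (`|u i 0| * Nc X i) by rewrite mulr_ge0 // mulr_ge0.
  have e2 : mu * (`|u i 0| * Nc X i) * (U - `|u i 0| * Nc X i) <=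
            mu * (`|u i 0| * Nc X i) * U.
    by rewrite ler_wpM2l // lerBlDr lerDl mulr_ge0.
  have e3 : (if i \in S then c0 ^+ 2 * M ^+ 2 * b i 0 ^+ 2 else 0) <=
            u i 0 * u i 0 * Nc X i ^+ 2.
    rewrite !mxE; case: (i \in S); last by rewrite mul0r mul0r.
    by rewrite -expr2 mulrC ler_wpM2l ?sqr_ge0.
  rewrite -/mu -/U; lra.
have hBuv : - (mu * U * V) <= Bf X u v.
  apply: le_trans (Bf_lower u v Xcol).
  have E : \sum_i (- (mu * (`|u i 0| * Nc X i) * V)) = - (mu * U * V).
    by rewrite sumrN -mulr_suml -mulr_sumr.
  rewrite -E -/mu -/V; apply: ler_sum => i _.
  have z : u i 0 * v i 0 = 0 by rewrite !mxE; case: (i \in S); ring.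
  have z2 : 0 <= mu * (`|u i 0| * Nc X i) * (`|v i 0| * Nc X i).
    by rewrite !mulr_ge0.
  rewrite z mul0r add0r mulrBr. lra.
have hBvv := Bf_ge0 X v.
have hB : c0 ^+ 2 * M ^+ 2 * Qs - 15 * mu * M ^+ 2 * a ^+ 2 <= Bf X b b.
  rewrite hb Bf_add.
  have f1 : mu * U * U <= mu * (M * a) * (M * a).
    by rewrite -mulrA -[X in _ <= X]mulrA ler_wpM2l // ler_pM.
  have f2 : mu * U * V <= mu * (M * a) * (M * (7 * a)).
    rewrite -mulrA -[X in _ <= X]mulrA ler_wpM2l // ler_pM //.
    by apply: le_trans hV _; rewrite ler_wpM2l // ltW.
  have f3 : mu * (M * a) * (M * a) + 2 * (mu * (M * a) * (M * (7 * a)))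
           = 15 * mu * M ^+ 2 * a ^+ 2 by ring.
  lra.
have k0 : 0 < (#|S|%:R : R) by rewrite ltr0n.
have Ma0 : 0 < M * a by rewrite mulr_gt0.
rewrite -[X in _ <= X]expr2 expr_div_n exprMn Bf_sq sqr_sqrtr ?ler0n //.
rewrite ler_pdivlMr ?exprn_gt0 //.
have g1 : (c0 ^+ 2 * M ^+ 2 * Qs - 15 * mu * M ^+ 2 * a ^+ 2) * #|S|%:R
          <= Bf X b b * #|S|%:R by rewrite ler_wpM2r // ltW.
have g2 : c0 ^+ 2 * M ^+ 2 * a ^+ 2 <= c0 ^+ 2 * M ^+ 2 * (#|S|%:R * Qs).
  by rewrite ler_wpM2l // mulr_ge0 // sqr_ge0.
have g3 : (c0 * c0 - 15 * #|S|%:R * mu) * (M * a) ^+ 2 =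
   c0 ^+ 2 * M ^+ 2 * a ^+ 2 - 15 * mu * M ^+ 2 * a ^+ 2 * #|S|%:R by ring.
rewrite g3.
have g4 : (c0 ^+ 2 * M ^+ 2 * Qs - 15 * mu * M ^+ 2 * a ^+ 2) * #|S|%:R
  = c0 ^+ 2 * M ^+ 2 * (#|S|%:R * Qs) - 15 * mu * M ^+ 2 * a ^+ 2 * #|S|%:R by ring.
lra.
Qed.

Lemma sumQ_gt0 (R : realType) p (b : 'cV[R]_p) :
  (0 < #|supp b|)%N -> 0 < \sum_i b i 0 ^+ 2.
Proof.
case/card_gt0P => i; rewrite /supp inE => bi.
rewrite (bigD1 i) //=.
have h1 : 0 < b i 0 ^+ 2 by rewrite exprn_even_gt0.
have h2 : 0 <= \sum_(j | j != i) b j 0 ^+ 2 by apply: sumr_ge0 => j _; exact: sqr_ge0.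
lra.
Qed.

Lemma l1_le (R : realType) p (b : 'cV[R]_p) :
  l1on [set: 'I_p]%SET b <= Num.sqrt (#|supp b|%:R) * l2norm b.
Proof.
have l0 : 0 <= l1on [set: 'I_p]%SET b by apply: sumr_ge0 => i _.
have e : l1on [set: 'I_p]%SET b = \sum_(i in supp b) `|b i 0|.
  rewrite /l1on (eq_bigl (fun i => true)); last by move=> i; rewrite inE.
  by apply: sum_supp => i ->; rewrite normr0.
rewrite /l2norm -sqrtrM ?ler0n //.
rewrite -(ger0_norm l0) -sqrtr_sqr ler_sqrt; last first.
  by rewrite mulr_ge0 ?ler0n ?sumr_ge0 // => i _; exact: sqr_ge0.
rewrite e; apply: le_trans (cauchy_set _ _) _.
rewrite ler_wpM2l ?ler0n //; apply: (@le_trans _ _ (\sum_(i in supp b) b i 0 ^+ 2)).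
  by apply: ler_sum => i _; rewrite real_normK ?num_real.
rewrite [X in _ <= X](sum_supp (b := b)); first by [].
by move=> i ->; rewrite expr0n.
Qed.

Lemma part2_real (R : realType) n p (X : 'M[R]_(n, p)) (b : 'cV[R]_p)
  (hM : 0 < matnorm X) (hk : (0 < #|supp b|)%N) :
  0 <= l2norm (X *m b) / (matnorm X * l2norm b) /\
  l2norm (X *m b) / (matnorm X * l2norm b) <=
  l2norm (X *m b) * Num.sqrt (#|supp b|%:R) / (matnorm X * l1on [set: 'I_p]%SET b).
Proof.
set l := l2norm (X *m b); set M := matnorm X.
have l0 : 0 <= l by exact: l2norm_ge0.
have l2p : 0 < l2norm b by rewrite /l2norm sqrtr_gt0 sumQ_gt0.
have l1p : 0 < l1on [set: 'I_p]%SET b.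
  case/card_gt0P: hk => i; rewrite /supp inE => bi.
  rewrite /l1on (bigD1 i) ?inE //=.
  have h1 : 0 < `|b i 0| by rewrite normr_gt0.
  have h2 : 0 <= \sum_(j in [set: 'I_p]%SET | j != i) `|b j 0| by apply: sumr_ge0.
  lra.
split; first by rewrite divr_ge0 // mulr_ge0 // ltW.
have e : (l2norm b)^-1 <= Num.sqrt (#|supp b|%:R) / l1on [set: 'I_p]%SET b.
  rewrite ler_pdivlMr // mulrC ler_pdivrMr //; exact: l1_le.
have -> : l / (M * l2norm b) = (l / M) * (l2norm b)^-1 by rewrite invfM mulrA.
have -> : l * Num.sqrt (#|supp b|%:R) / (M * l1on [set: 'I_p]%SET b) =
   (l / M) * (Num.sqrt (#|supp b|%:R) / l1on [set: 'I_p]%SET b).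
  by rewrite invfM; ring.
by rewrite ler_wpM2l // divr_ge0 // ltW.
Qed.



Lemma part3_real (R : realType) n p (X : 'M[R]_(n, p))
  (Xcol : forall i : 'I_p, col i X != 0) (b : 'cV[R]_p) (s : R)
  (c0 : R) (hc0 : 0 <= c0) (c1 : c0 <= 1) (hc : forall j, c0 * matnorm X <= Nc X j)
  (hM : 0 < matnorm X)
  (hk : (0 < #|supp b|)%N) (hks : #|supp b|%:R <= s) :
  c0 * c0 - s * mc X <=
  (l2norm (X *m b) / (matnorm X * l2norm b)) * (l2norm (X *m b) / (matnorm X * l2norm b)).
Proof.
set M := matnorm X; set mu := mc X; set k : R := #|supp b|%:R.
have mu0 : 0 <= mu by exact: mc_ge0.
have N0 : forall i, 0 <= Nc X i by move=> i; apply: ltW; exact: Nc_gt0.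
have NM : forall i, Nc X i <= M by move=> i; exact: Nc_le.
have cN2 : forall i, c0 ^+ 2 * M ^+ 2 <= Nc X i ^+ 2.
  move=> i; rewrite -exprMn lerXn2r ?nnegrE ?mulr_ge0 ?N0 //; exact: ltW.
have NM2 : forall i, Nc X i ^+ 2 <= M ^+ 2.
  move=> i; rewrite lerXn2r ?nnegrE ?N0 //; exact: ltW.
set Q := \sum_i b i 0 ^+ 2.
have Q0 : 0 < Q.
  case/card_gt0P: hk => i; rewrite /supp inE => bi.
  rewrite /Q (bigD1 i) //=.
  have h1 : 0 < b i 0 ^+ 2 by rewrite exprn_even_gt0.
  have h2 : 0 <= \sum_(j | j != i) b j 0 ^+ 2 by apply: sumr_ge0 => j _; exact: sqr_ge0.
  lra.
set W := \sum_i `|b i 0| * Nc X i.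
set D := \sum_i b i 0 * b i 0 * Nc X i ^+ 2.
have hB : (1 + mu) * D - mu * W * W <= Bf X b b.
  apply: le_trans (Bf_lower b b Xcol).
  rewrite -/mu -/W.
  have -> : \sum_i (b i 0 * b i 0 * Nc X i ^+ 2 -
      mu * (`|b i 0| * Nc X i) * (W - `|b i 0| * Nc X i)) =
      \sum_i ((1 + mu) * (b i 0 * b i 0 * Nc X i ^+ 2) - mu * W * (`|b i 0| * Nc X i)).
    apply: eq_bigr => i _.
    have : `|b i 0| ^+ 2 = b i 0 * b i 0 by rewrite real_normK ?num_real // expr2.
    move=> h; rewrite -[_ * b i 0]h; ring.
  by rewrite sumrB -!mulr_sumr.
have hW : W * W <= k * D.
  have -> : W = \sum_(i in supp b) `|b i 0| * Nc X i.
    by apply: sum_supp => i ->; rewrite normr0 mul0r.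
  rewrite -expr2; apply: le_trans (cauchy_set _ _) _.
  rewrite ler_wpM2l ?ler0n // /D (sum_supp (b := b) (F := fun i => b i 0 * b i 0 * Nc X i ^+ 2)).
    apply: ler_sum => i _.
    by rewrite exprMn real_normK ?num_real // expr2 lexx.
  by move=> i ->; rewrite !mul0r.
have hD1 : c0 ^+ 2 * M ^+ 2 * Q <= D.
  rewrite /Q mulr_sumr; apply: ler_sum => i _.
  by rewrite -expr2 mulrC ler_wpM2l ?sqr_ge0.
have hD2 : D <= M ^+ 2 * Q.
  rewrite /Q mulr_sumr; apply: ler_sum => i _.
  by rewrite -expr2 mulrC ler_wpM2r ?sqr_ge0.
have k1 : 1 <= k by rewrite /k ler1n.
have c2 : c0 ^+ 2 <= 1 by rewrite expr_le1.
set y := M ^+ 2 * Q.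
have y0 : 0 <= y by rewrite mulr_ge0 ?sqr_ge0 // ltW.
have hB2 : (1 + mu - mu * k) * D <= Bf X b b.
  have : mu * (W * W) <= mu * (k * D) by rewrite ler_wpM2l.
  move: hB; rewrite -mulrA; lra.
have key : (c0 ^+ 2 - s * mu) * y <= (1 + mu - mu * k) * D.
  have f2 : (mu * (k - 1)) * (c0 ^+ 2 * y) <= (mu * (k - 1)) * y.
    rewrite ler_wpM2l ?mulr_ge0 ?subr_ge0 //.
    by rewrite -[X in _ <= X]mul1r ler_wpM2r.
  have f3 : mu * (k - 1) * y <= mu * s * y.
    rewrite ler_wpM2r // ler_wpM2l //; lra.
  case: (leP 0 (1 + mu - mu * k)) => al.
    have f1 : (1 + mu - mu * k) * (c0 ^+ 2 * y) <= (1 + mu - mu * k) * D.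
      by rewrite ler_wpM2l // mulrA.
    have g : (1 + mu - mu * k) * (c0 ^+ 2 * y) = c0 ^+ 2 * y - mu * (k - 1) * c0 ^+ 2 * y.
      by ring.
    lra.
  have f1 : (1 + mu - mu * k) * y <= (1 + mu - mu * k) * D.
    by rewrite ler_wnM2l // ltW.
  have f4 : c0 ^+ 2 * y <= y by rewrite -[X in _ <= X]mul1r ler_wpM2r.
  lra.
rewrite -[X in _ <= X]expr2 expr_div_n exprMn Bf_sq l2norm_sq -/Q.
rewrite ler_pdivlMr ?mulr_gt0 ?exprn_gt0 //.
rewrite -expr2 -/y -/mu; lra.
Qed.
Lemma supp_delta (R : realType) p (i : 'I_p) :
  supp (delta_mx i 0 : 'cV[R]_p) = [set i]%SET.
Proof.
apply/setP => j; rewrite /supp !inE mxE eqxx andbT.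
by case: (j == i); rewrite ?oner_neq0 ?eqxx.
Qed.

Lemma phibar1_le (R : realType) n p (X : 'M[R]_(n, p)) i :
  (phibar X 1 <= (Nc X i / matnorm X)%:E)%E.
Proof.
apply: ereal_inf_lbound; exists (delta_mx i 0).
  by rewrite /= supp_delta cards1.
rewrite supp_delta cards1 sqrtr1 mulr1 -colE /Nc.
have -> : l1on [set: 'I_p]%SET (delta_mx i 0 : 'cV[R]_p) = 1.
  rewrite /l1on (bigD1 i) ?inE //= big1 => [|j /andP[_ ji]].
    by rewrite mxE !eqxx normr1 addr0.
  by rewrite mxE (negbTE ji) normr0.
by rewrite mulr1.
Qed.

Lemma c_fin (R : realType) n p (X : 'M[R]_(n, p))
  (Xcol : forall i : 'I_p, col i X != 0) (i : 'I_p) :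
  exists c0, phibar X 1 = c0%:E /\ 0 <= c0 /\ c0 <= 1 /\
             forall j, c0 * matnorm X <= Nc X j.
Proof.
have hM : 0 < matnorm X by apply: lt_le_trans (Nc_gt0 (Xcol i)) (Nc_le X i).
have g0 : (0 <= phibar X 1)%E.
  apply: inf_ge0 => b _; rewrite divr_ge0 ?mulr_ge0 ?sqrtr_ge0 ?l2norm_ge0 ?(ltW hM) //.
  by apply: sumr_ge0 => j _.
have := phibar1_le X i.
case E : (phibar X 1) g0 => [c0| |] //= g0 _.
exists c0; split => //; split; first by rewrite lee_fin in g0.
have hj : forall j, c0 * matnorm X <= Nc X j.
  move=> j; have := phibar1_le X j; rewrite E lee_fin => h.
  by rewrite -ler_pdivlMr.
split => //.
have := hj i; have := Nc_le X i => h1 h2.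
rewrite -(ler_pM2r hM) mul1r; exact: le_trans h2 h1.
Qed.

Unset Implicit Arguments. Set Strict Implicit.
Local Close Scope classical_set_scope.

Theorem lemma1 (R : realType) (n p : nat) (X : 'M[R]_(n, p))
    (Xcol : forall i : 'I_p, col i X != 0)
    (S : {set 'I_p}) (s : R) (s_gt0 : 0 < s) :
  ((phibar X 1 * phibar X 1 - (15 * #|S|%:R * mc X)%:E
      <= phiS X S * phiS X S)%E)
  /\ ((phitilde X s * phitilde X s <= phibar X s * phibar X s)%E)
  /\ ((phibar X 1 * phibar X 1 - (s * mc X)%:E
      <= phitilde X s * phitilde X s)%E).
Proof.
have hMi : forall i : 'I_p, 0 < matnorm X.
  by move=> i; apply: lt_le_trans (Nc_gt0 (Xcol i)) (Nc_le X i).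
split; [|split].
- apply: EL => b [hcone /existsP [i /andP [iS bi]]].
  have hM := hMi i.
  have [c0 [E [c00 [c01 hc]]]] := c_fin Xcol i.
  have ha : 0 < l1on S b.
    rewrite /l1on (bigD1 i) //=.
    have h1 : 0 < `|b i 0| by rewrite normr_gt0.
    have h2 : 0 <= \sum_(j in S | j != i) `|b j 0| by apply: sumr_ge0.
    by rewrite (lt_le_trans h1) // lerDl.
  have hS : (0 < #|S|)%N by apply/card_gt0P; exists i.
  split.
    by rewrite divr_ge0 ?mulr_ge0 ?sqrtr_ge0 ?l2norm_ge0 ?ler0n // ltW.
  rewrite E -EFinM -EFinB lee_fin; exact: part1_real.
- apply: EL2 => b [hk hks].
  have [i] := card_gt0P hk.
  move=> _; exact: part2_real (hMi i) hk.
- apply: EL => b [hk hks].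
  have [i _] := card_gt0P hk.
  have hM := hMi i.
  have [c0 [E [c00 [c01 hc]]]] := c_fin Xcol i.
  have l2p : 0 < l2norm b by rewrite /l2norm sqrtr_gt0 sumQ_gt0.
  split.
    by rewrite divr_ge0 ?mulr_ge0 ?l2norm_ge0 // ltW.
  rewrite E -EFinM -EFinB lee_fin; exact: part3_real.
Qed.
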